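(* Consider the unconstrained variational inequality problem of finding $x^*\in\mathbb{R}^d$ with $F(x^* )=0$ for a single-valued operator $F:\mathbb{R}^d\to\mathbb{R}^d$, under the following assumptions: (i) the solution set $\mathcal{X}^*$ is non-empty and there exist $x^*\in\mathcal{X}^*$ and $R\in\mathbb{R}$ with $\|x^*\|\le R$; (ii) $F$ is $\lambda$-weak $\mu$-quasi strongly monotone with $\lambda\ge 0$, $\mu>0$, i.e. $\langle F(x),x-x^*\rangle\ge \mu\|x-x^*\|^2-\lambda$ for all $x\in\mathbb{R}^d$ and some $x^*\in\mathcal{X}^*$; (iii) when SEG is run, $F$ is $L$-Lipschitz, and when SGDA is run, $F$ has at most $B$-linear growth, $\|F(x)\|\le B(1+\|x\|)$ for all $x$; (iv) the algorithm accesses a stochastic oracle returning $F_t=F(x_t)+U_t(x_t)$, where $(U_t(\cdot))_{t\ge0}$ are i.i.d. random fields adapted to a filtration $(\mathcal{F}_t)$ with $\mathbb{E}[U_t(x)\mid\mathcal{F}_t]=0$ and $\mathbb{E}[\|U_t(x)\|^2\mid\mathcal{F}_t]\le\sigma^2$ for all $x$; (v) $U_t(x)=U_t^a(x)+U_t^b(x)$ where $U_t^a(x)$ has a Lebesgue density $p_{U_t^a(x)}$ with $\inf_{x\in C}p_{U_t^a(x)}(t)>0$ for every bounded $C\subseteq\mathbb{R}^d$ and every $t\in\mathbb{R}^d$. Let the iterates be generated either by SGDA, $x_{t+1}=x_t-\gamma(F(x_t)+U_t(x_t))$ with $\gamma<\mu/B^2$, or by SEG, $x_{t+1/2}=x_t-\gamma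 F_t$, $x_{t+1}=x_t-\alpha\gamma F_{t+1/2}$ with $\gamma<1/(2\mu+\sqrt{3}L)$ and $\alpha\in(0,1)$. Then the function $V:\mathbb{R}^d\to\mathbb{R}$, $V(x)=\|x-x^*\|^2+1$, satisfies the following geometric drift property for the Markov chain $(x_t)_{t\ge0}$: there exist a measurable set $C$ and constants $\beta>0$, $b<\infty$ such that \[ \Delta V(x)\le -\beta V(x)+b\,\mathbf{1}_C(x)\quad\text{for all }x\in\mathbb{R}^d, \] where $\Delta V(x)=\int_{y\in\mathbb{R}^d}P(x,dy)V(y)-V(x)$ and $P$ is the (time-homogeneous) transition kernel of the chain.
   Context: SGDA = stochastic gradient descent ascent; SEG = stochastic extragradient (double step-size). The transition kernel is $P(x,S)=\Pr[x_{t+1}\in S\mid x_t=x]$. This property is the (V4) geometric drift condition of Meyn and Tweedie. *)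

(* Defs.v *)
(* R^d is modelled as d.-tuple R, which
   carries the library's product (= Borel) sigma-algebra; the Euclidean
   structure is defined explicitly below. *)
From HB Require Import structures.
From mathcomp Require Import all_boot all_order all_algebra.
From mathcomp Require Import all_classical all_reals all_analysis.
Set Implicit Arguments. Unset Strict Implicit. Unset Printing Implicit Defensive.
Import Order.TTheory GRing.Theory Num.Theory.
Local Open Scope classical_set_scope.
Local Open Scope ring_scope.

Section Euclid.
Variables (R : realType) (d : nat).
Definition vzero : d.-tuple R := [tuple (0 : R) | i < d].
Definition vadd (x y : d.-tuple R) : d.-tuple R := [tuple tnth x i + tnth y i | i < d].
Definition vsub (x y : d.-tuple R) : d.-tuple R := [tuple tnth x i - tnth y i | i < d].
Definition vscale (a : R) (x : d.-tuple R) : d.-tuple R := [tuple a * tnth x i | i < d].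
Definition dot (x y : d.-tuple R) : R := \sum_(i < d) tnth x i * tnth y i.
Definition vnorm (x : d.-tuple R) : R := Num.sqrt (dot x x).
End Euclid.

(* Lebesgue integral on R^n of a nonnegative function, defined as the iterated
   one-dimensional Lebesgue integral (Tonelli); n = 0: R^0 is a point. *)
Fixpoint lebint (R : realType) (n : nat) : (n.-tuple R -> \bar R) -> \bar R :=
  match n return (n.-tuple R -> \bar R) -> \bar R with
  | 0 => fun f => f [tuple]
  | n'.+1 => fun f =>
      (\int[@lebesgue_measure R]_t lebint (fun v : n'.-tuple R => f (cons_tuple t v)))%E
  end.

Section Assumptions.
Variables (R : realType) (d : nat).
Local Notation vec := (d.-tuple R).

Definition weak_quasi_strongly_monotone (F : vec -> vec) (lam mu : R) (xs : vec) :=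
  forall x, mu * vnorm (vsub x xs) ^+ 2 - lam <= dot (F x) (vsub x xs).

Definition lipschitz_op (F : vec -> vec) (L : R) :=
  forall x y, vnorm (vsub (F x) (F y)) <= L * vnorm (vsub x y).

Definition linear_growth (F : vec -> vec) (B : R) :=
  forall x, vnorm (F x) <= B * (1 + vnorm x).

Definition bounded_set (C : set vec) := exists M : R, forall x, C x -> vnorm x <= M.

Variables (dO : measure_display) (Omega : measurableType dO) (P : probability Omega R).

(* assumption (iv), for the common law of the i.i.d. fields U_t:
   jointly measurable random field, mean zero, second moment <= sigma^2 *)
Definition noise_field (U : Omega -> vec -> vec) (sigma : R) :=
  measurable_fun [set: Omega * vec] (fun z => U z.1 z.2) /\
  (forall x (i : 'I_d),
     P.-integrable [set: Omega] (fun w => (tnth (U w x) i)%:E) /\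
     (\int[P]_w (tnth (U w x) i)%:E = 0)%E) /\
  (forall x, (\int[P]_w ((vnorm (U w x)) ^+ 2)%:E <= (sigma ^+ 2)%:E)%E).

Definition noise_density (U Ua Ub : Omega -> vec -> vec) (p : vec -> vec -> R) :=
  (forall w x, U w x = vadd (Ua w x) (Ub w x)) /\
  (forall x, measurable_fun [set: Omega] (fun w => Ua w x)) /\
  (forall x t, 0 <= p x t) /\
  (forall x, measurable_fun [set: vec] (p x)) /\
  (forall x (A : set vec), measurable A ->
     P [set w | A (Ua w x)] = lebint (fun t => (\1_A t * p x t)%:E)) /\
  (forall C : set vec, bounded_set C -> forall t : vec,
     exists c : R, 0 < c /\ forall x, C x -> c <= p x t).

Definition sgda_step (F : vec -> vec) (U : Omega -> vec -> vec) (gamma : R)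
  (w : Omega) (x : vec) : vec :=
  vsub x (vscale gamma (vadd (F x) (U w x))).

(* one step of SEG; the half step uses a fresh independent copy of the noise,
   hence the sample space Omega * Omega with the product probability *)
Definition seg_step (F : vec -> vec) (U : Omega -> vec -> vec) (gamma alpha : R)
  (w : Omega * Omega) (x : vec) : vec :=
  let xh := vsub x (vscale gamma (vadd (F x) (U w.1 x))) in
  vsub x (vscale (alpha * gamma) (vadd (F xh) (U w.2 xh))).

Definition sgda_kernel F U gamma (x : vec) : set vec -> \bar R :=
  pushforward P (fun w => sgda_step F U gamma w x).

Definition seg_kernel F U gamma alpha (x : vec) : set vec -> \bar R :=
  pushforward (P \x P)%E (fun w => seg_step F U gamma alpha w x).

End Assumptions.

Definition driftV (R : realType) (d : nat) (K : d.-tuple R -> set (d.-tuple R) -> \bar R)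
  (V : d.-tuple R -> R) (x : d.-tuple R) : \bar R :=
  (\int[K x]_y (V y)%:E - (V x)%:E)%E.

Definition geometric_drift (R : realType) (d : nat)
  (K : d.-tuple R -> set (d.-tuple R) -> \bar R) (V : d.-tuple R -> R) :=
  exists (C : set (d.-tuple R)) (beta b : R),
    measurable C /\ 0 < beta /\
    forall x, (driftV K V x <= (- beta * V x + b * \1_C x)%:E)%E.

Definition Vfun (R : realType) (d : nat) (xs : d.-tuple R) (x : d.-tuple R) : R :=
  vnorm (vsub x xs) ^+ 2 + 1.

(* Main.v *)
Require Import Defs.
From HB Require Import structures.
From mathcomp Require Import all_boot all_order all_algebra.
From mathcomp Require Import all_classical all_reals all_analysis.
From mathcomp Require Import ring lra.
From mathcomp Require Import measurable_realfun.
Import Order.TTheory GRing.Theory Num.Theory.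
Local Open Scope classical_set_scope.
Local Open Scope ring_scope.
Set Implicit Arguments. Unset Strict Implicit. Unset Printing Implicit Defensive.

Section VecAlg.
Context (R : realType) (d : nat).
Local Notation vec := (d.-tuple R).

Lemma tnth_vadd (x y : vec) i : tnth (vadd x y) i = tnth x i + tnth y i.
Proof. by rewrite tnth_mktuple. Qed.
Lemma tnth_vsub (x y : vec) i : tnth (vsub x y) i = tnth x i - tnth y i.
Proof. by rewrite tnth_mktuple. Qed.
Lemma tnth_vscale a (x : vec) i : tnth (vscale a x) i = a * tnth x i.
Proof. by rewrite tnth_mktuple. Qed.
Lemma tnth_vzero i : tnth (vzero R d) i = 0.
Proof. by rewrite tnth_mktuple. Qed.

Lemma dotC (x y : vec) : dot x y = dot y x.
Proof. by apply: eq_bigr => i _; rewrite mulrC. Qed.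
Lemma dotDl (x y z : vec) : dot (vadd x y) z = dot x z + dot y z.
Proof. rewrite /dot -big_split /=; apply: eq_bigr => i _; rewrite tnth_vadd; ring. Qed.
Lemma dotBl (x y z : vec) : dot (vsub x y) z = dot x z - dot y z.
Proof. rewrite /dot -sumrB /=; apply: eq_bigr => i _; rewrite tnth_vsub; ring. Qed.
Lemma dotZl a (x z : vec) : dot (vscale a x) z = a * dot x z.
Proof. rewrite /dot mulr_sumr; apply: eq_bigr => i _; rewrite tnth_vscale; ring. Qed.
Lemma dotDr (x y z : vec) : dot z (vadd x y) = dot z x + dot z y.
Proof. by rewrite dotC dotDl !(dotC z). Qed.
Lemma dotBr (x y z : vec) : dot z (vsub x y) = dot z x - dot z y.
Proof. by rewrite dotC dotBl !(dotC z). Qed.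
Lemma dotZr a (x z : vec) : dot z (vscale a x) = a * dot z x.
Proof. by rewrite dotC dotZl !(dotC z). Qed.
Lemma dot_ge0 (x : vec) : 0 <= dot x x.
Proof. by apply: sumr_ge0 => i _; rewrite -expr2 sqr_ge0. Qed.
Lemma vnorm2 (x : vec) : vnorm x ^+ 2 = dot x x.
Proof. by rewrite /vnorm sqr_sqrtr // dot_ge0. Qed.
Lemma vnorm_ge0 (x : vec) : 0 <= vnorm x.
Proof. exact: sqrtr_ge0. Qed.

End VecAlg.

Section VecMeas.
Context (R : realType) (d : nat) (dT : measure_display) (T : measurableType dT).
Local Notation vec := (d.-tuple R).

Lemma mtnth (f : T -> vec) i : measurable_fun setT f ->
  measurable_fun setT (fun t => tnth (f t) i).
Proof. by move=> /measurable_fun_tnthP; apply. Qed.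

Lemma mvadd (f g : T -> vec) : measurable_fun setT f -> measurable_fun setT g ->
  measurable_fun setT (fun t => vadd (f t) (g t)).
Proof.
move=> mf mg; apply/measurable_fun_tnthP => i.
rewrite (_ : _ \o _ = fun t => tnth (f t) i + tnth (g t) i).
  by apply: measurable_funD; apply: mtnth.
by apply: funext => t /=; rewrite tnth_vadd.
Qed.

Lemma mvsub (f g : T -> vec) : measurable_fun setT f -> measurable_fun setT g ->
  measurable_fun setT (fun t => vsub (f t) (g t)).
Proof.
move=> mf mg; apply/measurable_fun_tnthP => i.
rewrite (_ : _ \o _ = fun t => tnth (f t) i - tnth (g t) i).
  by apply: measurable_funB; apply: mtnth.
by apply: funext => t /=; rewrite tnth_vsub.
Qed.

Lemma mvscale a (f : T -> vec) : measurable_fun setT f ->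
  measurable_fun setT (fun t => vscale a (f t)).
Proof.
move=> mf; apply/measurable_fun_tnthP => i.
rewrite (_ : _ \o _ = fun t => a * tnth (f t) i).
  by apply: measurable_funM => //; apply: mtnth.
by apply: funext => t /=; rewrite tnth_vscale.
Qed.

Lemma mvcst (v : vec) : measurable_fun setT (fun _ : T => v).
Proof. exact: measurable_cst. Qed.

Lemma mdot (f g : T -> vec) : measurable_fun setT f -> measurable_fun setT g ->
  measurable_fun setT (fun t => dot (f t) (g t)).
Proof.
move=> mf mg; rewrite /dot; apply: measurable_sum => i.
by apply: measurable_funM; apply: mtnth.
Qed.

Lemma mvnorm (f : T -> vec) : measurable_fun setT f ->
  measurable_fun setT (fun t => vnorm (f t)).
Proof.
move=> mf; rewrite /vnorm.
exact: measurableT_comp (continuous_measurable_fun (@sqrt_continuous R)) (mdot mf mf).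
Qed.

End VecMeas.

Section LipMeas.
Context (R : realType) (d : nat).
Local Notation vec := (d.-tuple R).

Lemma abs_tnth_le (v : vec) i : `|tnth v i| <= vnorm v.
Proof.
rewrite -sqrtr_sqr /vnorm ler_sqrt ?dot_ge0 // /dot (bigD1 i) //= expr2.
by rewrite lerDl; apply: sumr_ge0 => j _; rewrite -expr2 sqr_ge0.
Qed.

Definition zs (j : nat) : vec :=
  match (unpickle j : option (nat * d.-tuple int)) with
  | Some (m, k) => [tuple (tnth k i)%:~R / (m.+1)%:R | i < d]
  | None => vzero R d
  end.

Lemma vnorm_sym (a b : vec) : vnorm (vsub a b) = vnorm (vsub b a).
Proof. by rewrite /vnorm /dot; congr Num.sqrt; apply: eq_bigr => i _; rewrite !tnth_vsub; ring. Qed.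

Lemma zs_dense (x : vec) (e : R) : 0 < e -> exists j, vnorm (vsub x (zs j)) < e.
Proof.
move=> e0.
have e20 : 0 < e ^+ 2 by rewrite exprn_gt0.
have hd : 0 <= d%:R / e ^+ 2 by rewrite divr_ge0 // ltW.
set m := Num.Def.archi_bound (d%:R / e ^+ 2).
have hm := archi_boundP hd; rewrite -/m in hm.
set M : R := (m.+1)%:R.
have M0 : 0 < M by rewrite ltr0n.
pose k : d.-tuple int := [tuple Num.floor (M * tnth x i) | i < d].
exists (pickle (m, k)); rewrite /zs pickleK.
have hi : forall i, (tnth (vsub x [tuple (tnth k i0)%:~R / (m.+1)%:R | i0 < d]) i) ^+ 2
    <= 1 / M ^+ 2.
  move=> i; rewrite tnth_vsub !tnth_mktuple -/M.
  have := floor_itv (M * tnth x i); set f := (Num.floor _)%:~R; move=> /andP[h1 h2].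
  rewrite intrD -/f mulr1z in h2.
  have a0 : 0 <= tnth x i - f / M.
    by rewrite subr_ge0 ler_pdivrMr // mulrC.
  have a1 : tnth x i - f / M <= 1 / M.
    rewrite lerBlDr -mulrDl ler_pdivlMr // mulrC addrC; exact: ltW.
  rewrite (_ : 1 / M ^+ 2 = (1 / M) * (1 / M)); last by rewrite expr2 mulf_div mulr1.
  by rewrite expr2 ler_pM.
rewrite /vnorm -[e]ger0_norm ?ltW // -sqrtr_sqr ltr_sqrt //.
apply: (@le_lt_trans _ _ (\sum_(i < d) 1 / M ^+ 2)).
  by apply: ler_sum => i _; rewrite -expr2; exact: hi.
rewrite sumr_const card_ord -mulr_natr mul1r mulrC ltr_pdivrMr ?exprn_gt0 //.
have hM : d%:R < e ^+ 2 * M.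
  rewrite -ltr_pdivrMl // mulrC; apply: (lt_le_trans hm); rewrite /M ler_nat; exact: leqnSn.
have M1 : 1 <= M by rewrite /M ler1n.
set E := e ^+ 2 in e20 hM *.
have hEM : 0 < E * M by rewrite mulr_gt0.
nra.
Qed.



Lemma lip_measurable (F : vec -> vec) L : lipschitz_op F L -> measurable_fun setT F.
Proof.
move=> hL; apply/measurable_fun_tnthP => i.
pose g := fun x => tnth (F x) i.
pose K := `|L|.
have hg : forall x z, g x <= g z + K * vnorm (vsub x z).
  move=> x z; have := abs_tnth_le (vsub (F x) (F z)) i; rewrite tnth_vsub => h1.
  have h2 := hL x z.
  have h3 : L * vnorm (vsub x z) <= K * vnorm (vsub x z).
    by rewrite ler_wpM2r ?vnorm_ge0 ?ler_norm.
  have h4 := ler_norm (tnth (F x) i - tnth (F z) i).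
  rewrite /g; lra.
pose h := fun j x => g (zs j) + K * vnorm (vsub x (zs j)).
have mh : forall j, measurable_fun setT (h j).
  move=> j; apply: measurable_funD => //; apply: measurable_funM => //.
  apply: (@mvnorm _ _ _ _ (fun t => vsub t (zs j))).
  apply/measurable_fun_tnthP => k.
  rewrite (_ : _ \o _ = fun t => tnth t k - tnth (zs j) k).
    by apply: measurable_funB => //; exact: measurable_tnth.
  by apply: funext => t /=; rewrite tnth_vsub.
have lb : forall x, setT x -> has_lbound (range (h ^~ x)).
  by move=> x _; exists (g x) => _ [j _ <-]; apply: hg.
have := measurable_fun_infs 0 lb mh.
apply: eq_measurable_fun => x _ /=.
have ne : sdrop (h ^~ x) 0 !=set0 by exists (h 0%N x); exists 0%N.
have hlb : has_lbound (sdrop (h ^~ x) 0).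
  by exists (g x) => _ [j _ <-]; apply: hg.
apply/eqP; rewrite eq_le; apply/andP; split; last first.
  by apply: lb_le_inf => // _ [j _ <-]; apply: hg.
apply/ler_addgt0Pr => e e0.
have K0 : 0 <= K := normr_ge0 L.
have K10 : 0 < 2 * K + 1 by lra.
have [j hj] := zs_dense x (divr_gt0 e0 K10).
apply: (@le_trans _ _ (h j x)).
  by apply: ge_inf => //; exists j.
rewrite /h.
have : g (zs j) <= g x + K * vnorm (vsub (zs j) x) by apply: hg.
rewrite (vnorm_sym (zs j) x).
move: hj; rewrite ltr_pdivlMr //.
have := vnorm_ge0 (vsub x (zs j)).
set n := vnorm _ => n0 hj hgj.
rewrite /g in hgj *. lra.
Qed.

End LipMeas.

Section Noise.
Local Open Scope ereal_scope.
Context (R : realType) (d : nat) (dO : measure_display) (Omega : measurableType dO)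
  (P : probability Omega R) (U : Omega -> d.-tuple R -> d.-tuple R) (sigma : R).
Hypothesis hU : noise_field P U sigma.
Local Notation vec := (d.-tuple R).

Lemma mU (y : vec) : measurable_fun setT (fun w => U w y).
Proof.
have [m _] := hU.
exact: (measurableT_comp m (pair2_measurable y)).
Qed.

Lemma mU2 (y : vec) : measurable_fun setT (fun w => (vnorm (U w y) ^+ 2)%R).
Proof.
under eq_fun do rewrite vnorm2.
exact: (mdot (mU y) (mU y)).
Qed.

Lemma int_U2 (y : vec) : P.-integrable setT (fun w => (vnorm (U w y) ^+ 2)%:E).
Proof.
apply/integrableP; split; first exact/measurable_EFinP/mU2.
under eq_integral do rewrite gee0_abs ?lee_fin ?sqr_ge0 //.
have [_ [_ h]] := hU.
apply: (le_lt_trans (h y)); exact: ltry.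
Qed.

Lemma int_U2_le (y : vec) : \int[P]_w (vnorm (U w y) ^+ 2)%:E <= (sigma ^+ 2)%:E.
Proof. by have [_ [_ h]] := hU; apply: h. Qed.

Lemma int_dotU (A y : vec) : P.-integrable setT (fun w => (dot A (U w y))%:E) /\
  \int[P]_w (dot A (U w y))%:E = 0.
Proof.
have [_ [h _]] := hU.
have e : (fun w => (dot A (U w y))%:E) =
    (fun w => \sum_(i < d) (tnth A i)%:E * (tnth (U w y) i)%:E).
  by apply: funext => w; rewrite /dot -sumEFin; apply: eq_bigr => i _; rewrite EFinM.
rewrite e; split.
  apply: integrable_sum => // i _; apply: integrableZl => //.
  by have [] := h y i.
rewrite integral_sum //; last first.
  by move=> i; apply: integrableZl => //; have [] := h y i.
apply: big1 => i _; rewrite integralZl //; last by have [] := h y i.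
by have [_ ->] := h y i; rewrite mule0.
Qed.


Lemma vexpand (a b u : vec) (c : R) :
  (vnorm (vsub a (vscale c (vadd b u))) ^+ 2 =
   vnorm (vsub a (vscale c b)) ^+ 2 + (- 2 * c) * dot (vsub a (vscale c b)) u
   + c ^+ 2 * vnorm u ^+ 2)%R.
Proof.
rewrite !vnorm2 !(dotBl, dotBr, dotZl, dotZr, dotDl, dotDr).
rewrite (dotC b a) (dotC u a) (dotC u b); ring.
Qed.

Lemma key_int (a b y : vec) (c : R) :
  \int[P]_w ((vnorm (vsub a (vscale c (vadd b (U w y))))) ^+ 2 + 1)%:E
  <= ((vnorm (vsub a (vscale c b))) ^+ 2 + c ^+ 2 * sigma ^+ 2 + 1)%:E.
Proof.
set A := vsub a (vscale c b).
have pw : forall w, ((vnorm (vsub a (vscale c (vadd b (U w y))))) ^+ 2 + 1)%:E =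
    (vnorm A ^+ 2 + 1)%:E + (((- 2 * c)%:E * (dot A (U w y))%:E) +
       (c ^+ 2)%:E * (vnorm (U w y) ^+ 2)%:E).
  by move=> w; rewrite -!EFinM -!EFinD vexpand; congr EFin; ring.
under eq_integral => w _ do rewrite pw.
have [iD iD0] := int_dotU A y.
have i2 := int_U2 y.
rewrite integralD //; last 2 first.
- exact: finite_measure_integrable_cst.
- by apply: integrableD => //; apply: integrableZl.
rewrite integralD //; last 2 first.
- exact: integrableZl.
- exact: integrableZl.
rewrite integralZl // integralZl // iD0 mule0 add0e.
have -> : \int[P]_w (vnorm A ^+ 2 + 1)%:E = (vnorm A ^+ 2 + 1)%:E.
  by rewrite -[RHS]mule1 -(probability_setT P); exact: integral_cst.
rewrite (_ : (vnorm A ^+ 2 + c ^+ 2 * sigma ^+ 2 + 1)%R =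
   (vnorm A ^+ 2 + 1) + c ^+ 2 * sigma ^+ 2)%R; last by ring.
rewrite (EFinD (vnorm A ^+ 2 + 1)) (EFinM (c ^+ 2)); apply: leeD2l; apply: lee_wpmul2l.
  by rewrite lee_fin sqr_ge0.
exact: int_U2_le.
Qed.

End Noise.

Section Drift.
Local Open Scope ereal_scope.
Context (R : realType) (d : nat).
Local Notation vec := (d.-tuple R).

Lemma drift_from (K : vec -> set vec -> \bar R) (V : vec -> R) (beta b : R) :
  (0 < beta)%R ->
  (forall x, \int[K x]_y (V y)%:E <= ((1 - beta) * V x + b)%:E) ->
  geometric_drift K V.
Proof.
move=> b0 h; exists setT, beta, b; split => //; split => // x.
rewrite /driftV indicT /=.
apply: le_trans (leeD2r _ (h x)) _.
by rewrite -EFinD lee_fin; lra.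
Qed.

Lemma mvsub_c (z : vec) : measurable_fun setT (fun x : vec => vsub x z).
Proof.
apply/measurable_fun_tnthP => k.
rewrite (_ : _ \o _ = fun t => tnth t k - tnth z k)%R.
  by apply: measurable_funB => //; exact: measurable_tnth.
by apply: funext => t /=; rewrite tnth_vsub.
Qed.

Lemma mVfun (xs : vec) : measurable_fun setT (Vfun xs).
Proof.
rewrite /Vfun; apply: measurable_funD => //.
rewrite (_ : (fun x => _) = fun x => dot (vsub x xs) (vsub x xs)).
  by apply: (@mdot _ _ _ _ (fun x => vsub x xs) (fun x => vsub x xs)); apply: mvsub_c.
by apply: funext => x; rewrite vnorm2.
Qed.

Lemma Vfun_ge0 (xs x : vec) : (0 <= Vfun xs x)%R.
Proof. by rewrite /Vfun addr_ge0 // sqr_ge0. Qed.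

Lemma vsub_swap (x v xs : vec) : vsub (vsub x v) xs = vsub (vsub x xs) v.
Proof. by apply: eq_from_tnth => i; rewrite !tnth_vsub; ring. Qed.

End Drift.

Lemma vexp2 (R : realType) (d : nat) (a b : d.-tuple R) (c : R) :
  vnorm (vsub a (vscale c b)) ^+ 2 =
  vnorm a ^+ 2 - 2 * c * dot a b + c ^+ 2 * vnorm b ^+ 2.
Proof. by rewrite !vnorm2 !(dotBl, dotBr, dotZl, dotZr) (dotC b a); ring. Qed.

Lemma norm_young (R : realType) (d : nat) (x xs : d.-tuple R) :
  3 * vnorm x ^+ 2 <= 4 * vnorm (vsub x xs) ^+ 2 + 12 * vnorm xs ^+ 2.
Proof.
have h := dot_ge0 (vsub (vsub x xs) (vscale 3 xs)).
rewrite !vnorm2; move: h.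
rewrite !(dotBl, dotBr, dotZl, dotZr) (dotC xs x); lra.
Qed.

Section SGDA.
Local Open Scope ereal_scope.
Context (R : realType) (d : nat) (dO : measure_display) (Omega : measurableType dO)
  (P : probability Omega R) (U : Omega -> d.-tuple R -> d.-tuple R) (sigma : R).
Hypothesis hU : noise_field P U sigma.
Local Notation vec := (d.-tuple R).
Context (F : vec -> vec) (xs : vec) (lam mu : R).
Hypotheses (lam0 : (0 <= lam)%R) (mu0 : (0 < mu)%R)
  (hmono : weak_quasi_strongly_monotone F lam mu xs).

Lemma sgda_drift B gamma : linear_growth F B -> (0 < gamma)%R -> (gamma < mu / B ^+ 2)%R ->
  geometric_drift (sgda_kernel P F U gamma) (Vfun xs).
Proof.
move=> hB g0 gB.
have B20 : (0 < B ^+ 2)%R.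
  rewrite lt0r sqr_ge0 andbT; apply/negP => /eqP B0.
  by move: gB; rewrite B0 invr0 mulr0; lra.
have gB' : (gamma * B ^+ 2 < mu)%R by rewrite -ltr_pdivlMr.
set s2 := (vnorm xs ^+ 2)%R.
pose beta := (gamma * (mu - gamma * B ^+ 2))%R.
pose b := (beta + 2 * gamma * lam + gamma ^+ 2 * B ^+ 2 * (6 * s2 + 4)
   + gamma ^+ 2 * sigma ^+ 2)%R.
apply: (@drift_from _ _ _ _ beta b).
  by apply: mulr_gt0 => //; lra.
move=> x.
rewrite /sgda_kernel ge0_integral_pushforward //.
- rewrite (_ : _ @^-1` _ = setT); last by apply: funext.
  under eq_integral => w _ do rewrite /= /Vfun /sgda_step vsub_swap.
  apply: le_trans (key_int hU (vsub x xs) (F x) x gamma) _.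
  rewrite lee_fin /Vfun vexp2.
  set r := vsub x xs.
  have hm := hmono x; rewrite -/r dotC in hm.
  have hg := hB x.
  set n := vnorm x in hg.
  have n0 : (0 <= n)%R := vnorm_ge0 x.
  have Fx0 := vnorm_ge0 (F x).
  have hFF : (vnorm (F x) ^+ 2 <= B ^+ 2 * (1 + n) ^+ 2)%R.
    rewrite -exprMn; apply: lerXn2r => //; rewrite nnegrE //.
    exact: le_trans hg.
  have hn := norm_young x xs; rewrite -/r -/n -/s2 in hn.
  have hn2 : (9 * (1 + n) ^+ 2 <= 18 * vnorm r ^+ 2 + 54 * s2 + 36)%R.
    have := sqr_ge0 (n - 3); rewrite !expr2 in hn *; nra.
  have hF2 : (vnorm (F x) ^+ 2 <= B ^+ 2 * (2 * vnorm r ^+ 2 + 6 * s2 + 4))%R.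
    apply: le_trans hFF _; rewrite ler_wpM2l ?sqr_ge0 //; lra.
  have hF3 : (gamma ^+ 2 * vnorm (F x) ^+ 2 <=
      gamma ^+ 2 * (B ^+ 2 * (2 * vnorm r ^+ 2 + 6 * s2 + 4)))%R.
    by rewrite ler_wpM2l ?sqr_ge0.
  have hm2 : (2 * gamma * (mu * vnorm r ^+ 2 - lam) <= 2 * gamma * dot r (F x))%R.
    by rewrite ler_wpM2l // mulr_ge0 // ltW.
  have hp : ((gamma * vnorm r ^+ 2) * (gamma * B ^+ 2) <= (gamma * vnorm r ^+ 2) * mu)%R.
    apply: ler_wpM2l; [apply: mulr_ge0; [exact: ltW | exact: sqr_ge0] | exact: ltW].
  rewrite /b /beta; lra.
- change (measurable_fun setT (fun w => vsub x (vscale gamma (vadd (F x) (U w x))))).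
  apply: mvsub; first exact: measurable_cst.
  apply: mvscale; apply: mvadd; first exact: measurable_cst.
  exact: mU hU x.
- by apply/measurable_EFinP; exact: mVfun.
- by move=> y _; rewrite lee_fin Vfun_ge0.

Qed.

End SGDA.

Section SEGalg.
Context (R : realType) (d : nat).
Local Notation vec := (d.-tuple R).

Lemma vsub_sq_le (p q : vec) : vnorm (vsub p q) ^+ 2 <= 2 * vnorm p ^+ 2 + 2 * vnorm q ^+ 2.
Proof.
have h := dot_ge0 (vadd p q); rewrite !vnorm2; move: h.
rewrite !(dotBl, dotBr, dotDl, dotDr) (dotC q p); lra.
Qed.

Lemma norm_le_split (a v : vec) : vnorm a ^+ 2 <= 2 * vnorm (vsub a v) ^+ 2 + 2 * vnorm v ^+ 2.
Proof.
have h := dot_ge0 (vsub a (vscale 2 v)); rewrite !vnorm2; move: h.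
rewrite !(dotBl, dotBr, dotZl, dotZr) (dotC v a); lra.
Qed.

Lemma vnorm_scale2 c (v : vec) : vnorm (vscale c v) ^+ 2 = c ^+ 2 * vnorm v ^+ 2.
Proof. by rewrite !vnorm2 dotZl dotZr; ring. Qed.

Lemma vsub_sub_self (x v : vec) : vnorm (vsub (vsub x v) x) ^+ 2 = vnorm v ^+ 2.
Proof.
rewrite !vnorm2 !(dotBl, dotBr) (dotC v x); ring.
Qed.

Lemma vsub0 (v : vec) : vsub v (vzero R d) = v.
Proof. by apply: eq_from_tnth => i; rewrite tnth_vsub tnth_vzero subr0. Qed.

Lemma vsub_add (h a u : vec) : vsub h (vadd a u) = vsub (vsub h a) u.
Proof. by apply: eq_from_tnth => i; rewrite !(tnth_vsub, tnth_vadd); ring. Qed.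

Lemma seg_pointwise (F : vec -> vec) (xs : vec) (lam mu L gamma alpha : R) (x u : vec) :
  weak_quasi_strongly_monotone F lam mu xs -> lipschitz_op F L ->
  0 < mu -> 0 < gamma -> gamma < 1 / (2 * mu + Num.sqrt 3 * L) -> 0 < alpha < 1 ->
  vnorm (vsub (vsub x xs) (vscale (alpha * gamma)
     (F (vsub x (vscale gamma (vadd (F x) u)))))) ^+ 2 <=
  (1 - alpha * gamma * mu) * vnorm (vsub x xs) ^+ 2 + 2 * alpha * gamma * lam
  + 2 * alpha * gamma ^+ 2 * vnorm u ^+ 2.
Proof.
move=> hm hL mu0 g0 gL /andP[a0 a1].
have a0' := ltW a0; have g0' := ltW g0; have mu0' := ltW mu0.
set g := vadd (F x) u.
set xh := vsub x (vscale gamma g).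
set r := vsub x xs.
set h := F xh.
set s := vsub r (vscale gamma g).
have sE : vsub xh xs = s by rewrite /xh vsub_swap.
have hmx := hm xh; rewrite sE in hmx.
have e1 := vexp2 r h (alpha * gamma).
have e2 : dot r h = dot h s + gamma * dot g h.
  by rewrite /s dotC dotBr dotZr (dotC h g); ring.
have e3 : vnorm (vsub h g) ^+ 2 = vnorm h ^+ 2 - 2 * dot g h + vnorm g ^+ 2.
  by rewrite !vnorm2 !(dotBl, dotBr) (dotC h g); ring.
have i1 : vnorm (vsub h g) ^+ 2 <= 2 * vnorm (vsub h (F x)) ^+ 2 + 2 * vnorm u ^+ 2.
  by rewrite /g vsub_add; exact: vsub_sq_le.
have i2 : vnorm (vsub h (F x)) ^+ 2 <= L ^+ 2 * (gamma ^+ 2 * vnorm g ^+ 2).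
  have := hL xh x; rewrite -/h => hl.
  have hx : vnorm (vsub xh x) ^+ 2 = gamma ^+ 2 * vnorm g ^+ 2.
    by rewrite /xh vsub_sub_self vnorm_scale2.
  rewrite -hx -exprMn; apply: lerXn2r => //; rewrite nnegrE ?vnorm_ge0 //.
  exact: le_trans (vnorm_ge0 _) hl.
have i3 : vnorm r ^+ 2 <= 2 * vnorm s ^+ 2 + 2 * (gamma ^+ 2 * vnorm g ^+ 2).
  by rewrite -vnorm_scale2; exact: norm_le_split.
have i4 : (alpha * gamma * gamma * vnorm g ^+ 2) * (2 * L ^+ 2 * gamma ^+ 2 + 2 * gamma * mu - 1) <= 0.
  have pre0 : 0 <= alpha * gamma * gamma * vnorm g ^+ 2.
    by rewrite !mulr_ge0 // ?vnorm_ge0.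
  have [L0|L0] := leP 0 L.
    apply: mulr_ge0_le0 => //.
    set t := Num.sqrt 3 * L.
    have t0 : 0 <= t by rewrite mulr_ge0 // sqrtr_ge0.
    have t2 : t ^+ 2 = 3 * L ^+ 2 by rewrite exprMn sqr_sqrtr // ler0n.
    have den0 : 0 < 2 * mu + t by lra.
    move: gL; rewrite ltr_pdivlMr // => gL.
    have p0 : 0 <= gamma * t by rewrite mulr_ge0.
    have gm : 0 < gamma * mu by rewrite mulr_gt0.
    rewrite -/t in gL.
    have p1 : gamma * t < 1 by lra.
    have pp : (gamma * t) ^+ 2 <= gamma * t.
      by rewrite expr2 ler_piMr // ltW.
    have e4 : 3 * (2 * L ^+ 2 * gamma ^+ 2) = 2 * (gamma * t) ^+ 2.
      by rewrite exprMn t2; ring.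
    lra.
  have ng : vnorm g = 0.
    have := hL g (vzero R d); rewrite vsub0 => hl.
    have := vnorm_ge0 (vsub (F g) (F (vzero R d))).
    have := vnorm_ge0 g.
    move=> n0 n1; apply/eqP; rewrite eq_le n0 andbT; nra.
  by rewrite ng expr0n /= mulr0 mul0r.
have m1 : 2 * alpha * gamma * (mu * vnorm s ^+ 2 - lam) <= 2 * alpha * gamma * dot h s.
  by apply: ler_wpM2l => //; rewrite !mulr_ge0.
have m2 : alpha * gamma * mu * vnorm r ^+ 2 <=
    alpha * gamma * mu * (2 * vnorm s ^+ 2 + 2 * (gamma ^+ 2 * vnorm g ^+ 2)).
  by apply: ler_wpM2l => //; rewrite !mulr_ge0.
have m3 : alpha * gamma ^+ 2 * (vnorm h ^+ 2 - 2 * dot g h + vnorm g ^+ 2) <=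
    alpha * gamma ^+ 2 * (2 * (L ^+ 2 * (gamma ^+ 2 * vnorm g ^+ 2)) + 2 * vnorm u ^+ 2).
  rewrite -e3; apply: ler_wpM2l; first by rewrite mulr_ge0 // ?sqr_ge0.
  lra.
have m4 : (alpha * gamma) ^+ 2 * vnorm h ^+ 2 <= alpha * gamma ^+ 2 * vnorm h ^+ 2.
  rewrite (_ : (alpha * gamma) ^+ 2 * vnorm h ^+ 2 =
     (alpha * gamma ^+ 2 * vnorm h ^+ 2) * alpha); last by ring.
  by apply: ler_piMr; [rewrite !mulr_ge0 // ?vnorm_ge0 | exact: ltW].
rewrite e1 e2.
lra.
Qed.

End SEGalg.

Section SEG.
Local Open Scope ereal_scope.
Context (R : realType) (d : nat) (dO : measure_display) (Omega : measurableType dO)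
  (P : probability Omega R) (U : Omega -> d.-tuple R -> d.-tuple R) (sigma : R).
Hypothesis hU : noise_field P U sigma.
Local Notation vec := (d.-tuple R).
Context (F : vec -> vec) (xs : vec) (lam mu : R).
Hypotheses (lam0 : (0 <= lam)%R) (mu0 : (0 < mu)%R)
  (hmono : weak_quasi_strongly_monotone F lam mu xs).

Lemma seg_drift L gamma alpha : lipschitz_op F L -> (0 < gamma)%R ->
  (gamma < 1 / (2 * mu + Num.sqrt 3 * L))%R -> (0 < alpha < 1)%R ->
  geometric_drift (seg_kernel P F U gamma alpha) (Vfun xs).
Proof.
move=> hL g0 gL ha.
have /andP[a0 a1] := ha.
have mF := lip_measurable hL.
pose beta := (alpha * gamma * mu)%R.
pose b := (beta + 2 * alpha * gamma * lam + (alpha * gamma) ^+ 2 * sigma ^+ 2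
   + 2 * alpha * gamma ^+ 2 * sigma ^+ 2)%R.
apply: (@drift_from _ _ _ _ beta b).
  by rewrite !mulr_gt0.
move=> x.
pose xh := fun w1 : Omega => vsub x (vscale gamma (vadd (F x) (U w1 x))).
have mxh : measurable_fun setT xh.
  apply: mvsub; first exact: measurable_cst.
  apply: mvscale; apply: mvadd; first exact: measurable_cst.
  exact: mU hU x.
pose phi := fun w : Omega * Omega => seg_step F U gamma alpha w x.
have mphi : measurable_fun setT phi.
  change (measurable_fun setT (fun w : Omega * Omega =>
    vsub x (vscale (alpha * gamma) (vadd (F (xh w.1)) (U w.2 (xh w.1)))))).
  apply: mvsub; first exact: measurable_cst.
  apply: mvscale; apply: mvadd.
    exact: measurableT_comp mF (measurableT_comp mxh measurable_fst).
  have [mU0 _] := hU.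
  exact: (measurableT_comp mU0
    (measurable_fun_pair measurable_snd (measurableT_comp mxh measurable_fst))).
rewrite /seg_kernel ge0_integral_pushforward //; last 2 first.
- by apply/measurable_EFinP; exact: mVfun.
- by move=> y _; rewrite lee_fin Vfun_ge0.
rewrite (_ : _ @^-1` _ = setT); last by apply: funext.
set f := (fun y => _) \o _.
have mf : measurable_fun setT f.
  apply: measurableT_comp; last exact: mphi.
  by apply/measurable_EFinP; exact: mVfun.
have f0 : forall w, 0 <= f w by move=> w; rewrite lee_fin Vfun_ge0.
rewrite (fubini_tonelli1 f mf f0).
pose C := ((1 - beta) * vnorm (vsub x xs) ^+ 2 + 2 * alpha * gamma * lam
   + (alpha * gamma) ^+ 2 * sigma ^+ 2 + 1)%R.
pose c := (2 * alpha * gamma ^+ 2)%R.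
pose G := fun w1 => (C + c * vnorm (U w1 x) ^+ 2)%:E.
apply: (@le_trans _ _ (\int[P]_w1 G w1)).
  apply: ge0_le_integral => //.
  - by move=> w1 _; apply: integral_ge0 => w2 _; apply: f0.
  - exact: measurable_fun_fubini_tonelli_F.
  - apply/measurable_EFinP; apply: measurable_funD => //.
    by apply: measurable_funM => //; exact: mU2 hU x.
  move=> w1 _; rewrite /fubini_F.
  under eq_integral => w2 _ do rewrite /f /= /Vfun /seg_step /= vsub_swap.
  apply: le_trans (key_int hU (vsub x xs) (F (xh w1)) (xh w1) (alpha * gamma)) _.
  rewrite lee_fin /G /C /c.
  have := seg_pointwise x (U w1 x) hmono hL mu0 g0 gL ha.
  rewrite -/(xh w1) /beta; lra.
under eq_integral => w _ do rewrite /G EFinD EFinM.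
have i2 := int_U2 hU x.
rewrite integralD //; last 2 first.
- exact: finite_measure_integrable_cst.
- exact: integrableZl.
rewrite integralZl //.
have -> : \int[P]_w C%:E = C%:E.
  by rewrite -[RHS]mule1 -(probability_setT P); exact: integral_cst.
rewrite (_ : ((1 - beta) * Vfun xs x + b)%R = (C + c * sigma ^+ 2)%R); last first.
  by rewrite /Vfun /b /C /c; ring.
rewrite (EFinD C) (EFinM c); apply: leeD2l; apply: lee_wpmul2l.
  by rewrite lee_fin /c !mulr_ge0 // ltW.
exact: int_U2_le hU x.
Qed.

End SEG.

Unset Implicit Arguments. Set Strict Implicit.

Theorem corollary2 (R : realType) (d : nat) (dO : measure_display)
  (Omega : measurableType dO) (P : probability Omega R)
  (F : d.-tuple R -> d.-tuple R) (xs : d.-tuple R) (Rad lam mu sigma : R)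
  (U Ua Ub : Omega -> d.-tuple R -> d.-tuple R) (p : d.-tuple R -> d.-tuple R -> R) :
  (* (i) *)
  (exists x0 : d.-tuple R, F x0 = vzero R d /\ vnorm x0 <= Rad) ->
  (* (ii) *)
  F xs = vzero R d -> 0 <= lam -> 0 < mu ->
  weak_quasi_strongly_monotone F lam mu xs ->
  (* (iv), (v) *)
  noise_field P U sigma ->
  noise_density P U Ua Ub p ->
  (* SGDA *)
  (forall B gamma : R, linear_growth F B -> 0 < gamma -> gamma < mu / B ^+ 2 ->
     geometric_drift (sgda_kernel P F U gamma) (Vfun xs))
  /\
  (* SEG *)
  (forall L gamma alpha : R, lipschitz_op F L ->
     0 < gamma -> gamma < 1 / (2 * mu + Num.sqrt 3 * L) -> 0 < alpha < 1 ->
     geometric_drift (seg_kernel P F U gamma alpha) (Vfun xs)).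
Proof.
move=> _ _ lam0 mu0 hmono hU _; split.
- by move=> B gamma hB g0 gB; exact: (sgda_drift hU hmono hB g0 gB).
- by move=> L gamma alpha hL g0 gL ha; exact: (seg_drift hU mu0 hmono hL g0 gL ha).
Qed.
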